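(* Let $a,b,m$ be parameters. The power series $$\left(\frac{1+ax}{1+bx},\ \frac{mx(1+ax)}{(1+bx)^2}\right)\cdot c(x)=\frac{1+ax}{1+bx}\,c\!\left(\frac{mx(1+ax)}{(1+bx)^2}\right)$$ is the generating function of the sequence $(a_n)_{n\ge0}$ determined by $a_0=1$, $a_1=a-b+m$, and, for $n\ge2$, $$a_n=(2m-b)\,a_{n-1}+m\sum_{k=0}^{n-3}a_{k+1}a_{n-k-2}.$$
   Context: $c(x)=\frac{1-\sqrt{1-4x}}{2x}$ is the generating function of the Catalan numbers. For power series $g(x)$ with $g(0)\neq0$ and $f(x)$ with $f(0)=0$, the Riordan array $(g,f)$ acts on a power series $h(x)$ by $(g,f)\cdot h(x)=g(x)h(f(x))$. *)

(* Defs.v *)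
From mathcomp Require Import all_boot all_order all_algebra.
Set Implicit Arguments. Unset Strict Implicit. Unset Printing Implicit Defensive.
Import GRing.Theory.
Local Open Scope ring_scope.

Definition fps (R : comNzRingType) := nat -> R.

Section FPS.
Variable R : comNzRingType.

Definition fps1 : fps R := fun n => (n == 0%N)%:R.

Definition fps_mul (p q : fps R) : fps R :=
  fun n => \sum_(i < n.+1) p i * q (n - i)%N.

Definition fps_exp (p : fps R) (k : nat) : fps R := iter k (fps_mul p) fps1.

(* composition h(f(x)), meaningful when f 0 = 0 *)
Definition fps_comp (h f : fps R) : fps R :=
  fun n => \sum_(k < n.+1) h k * fps_exp f k n.

(* Riordan array action: (g, f) . h = g(x) h(f(x)) *)
Definition riordan_act (g f h : fps R) : fps R := fps_mul g (fps_comp h f).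

Definition fps_lin (c : R) : fps R :=
  fun n => if n == 0%N then 1 else if n == 1%N then c else 0.

(* 1/(1 + c x) = sum_n (-c)^n x^n *)
Definition fps_inv_lin (c : R) : fps R := fun n => (- c) ^+ n.

Definition fps_shift (p : fps R) : fps R :=
  fun n => if n is n'.+1 then p n' else 0.

Definition fps_scale (m : R) (p : fps R) : fps R := fun n => m * p n.

Lemma fps_inv_linP (c : R) n : fps_mul (fps_lin c) (fps_inv_lin c) n = fps1 n.
Proof.
rewrite /fps_mul /fps1 /fps_lin /fps_inv_lin.
case: n => [|n]; first by rewrite big_ord_recl big_ord0 /= subn0 expr0 mulr1 addr0.
rewrite big_ord_recl big_ord_recl /= big1 ?addr0; last first.
  by move=> i _; rewrite /bump /= mul0r.
rewrite /bump /= !subn0 mul1r exprS mulNr.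
by rewrite addn0 subn1 /= addNr.
Qed.

End FPS.

(* Catalan generating function c(x) = (1 - sqrt(1-4x))/(2x): coefficients are
   the Catalan numbers binom(2n,n)/(n+1) (the division is exact). *)
Definition catalan (n : nat) : nat := 'C(n.*2, n) %/ n.+1.
Definition catalan_fps (R : comNzRingType) : fps R := fun n => (catalan n)%:R.

Definition rg (R : comNzRingType) (a b : R) : fps R :=
  fps_mul (fps_lin a) (fps_inv_lin b).

Definition rf (R : comNzRingType) (a b m : R) : fps R :=
  fps_scale m (fps_shift (fps_mul (fps_lin a)
                  (fps_mul (fps_inv_lin b) (fps_inv_lin b)))).

(* Main.v *)
Require Import Defs.
From mathcomp Require Import all_boot all_order all_algebra.
Import GRing.Theory.
From mathcomp Require Import zify.
From Stdlib Require Import FunctionalExtensionality Ring_theory Ring.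


Lemma catalanE n : catalan n * n.+1 = 'C(n.*2, n).
Proof.
have h : n.+1 * 'C(n.*2, n.+1) = n * 'C(n.*2, n).
  by rewrite mul_bin_left; congr (_ * _); rewrite -addnn addnK.
have e : 'C(n.*2, n) = n.+1 * ('C(n.*2, n) - 'C(n.*2, n.+1)).
  rewrite mulnBr h -mulnBl subSnn mul1n //.
by rewrite /catalan divnK // e dvdn_mulr.
Qed.

Lemma catS n : catalan n.+1 * n.+2 = (4 * n + 2) * catalan n.
Proof.
have h1 := mul_bin_diag n.*2.+2 n.
have h2 := mul_bin_diag n.*2.+1 n.
have h3 : 'C(n.*2.+1, n) = 'C(n.*2.+1, n.+1).
  rewrite -(bin_sub (_ : n <= n.*2.+1)); last by lia.
  congr 'C(_, _); lia.
have e1 := catalanE n.+1. have e2 := catalanE n.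
rewrite doubleS in e1.
simpl in h1, h2.
apply/eqP; rewrite -(eqn_pmul2l (ltn0Sn n)); apply/eqP.
rewrite e1.
rewrite -h3 in h2.
move: h1 h2 e2; rewrite -!addnn.
move: ('C(_, n.+1)) ('C(_, n)) ('C(_,n)) => x y z.
move: (catalan n) => c.
nia.
Qed.

Definition wc N i := catalan i * catalan (N - i).

Lemma symw N (u : nat -> nat) :
  \sum_(i < N.+1) u i * wc N i = \sum_(i < N.+1) u (N - i) * wc N i.
Proof.
rewrite (reindex_inj rev_ord_inj) /=; apply: eq_bigr => i _.
rewrite subSS /wc subKn; last by rewrite -ltnS.
by rewrite mulnC [catalan _ * _]mulnC mulnC.
Qed.

Lemma S1 N : 2 * \sum_(i < N.+1) i * wc N i = N * \sum_(i < N.+1) wc N i.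
Proof.
rewrite mul2n -addnn {2}(symw N (fun i => i)) -big_split big_distrr /=.
apply: eq_bigr => i _; rewrite -mulnDl subnKC //; by rewrite -ltnS.
Qed.

Lemma segner N : catalan N.+1 = \sum_(i < N.+1) catalan i * catalan (N - i).
Proof.
elim: N => [|N IH]; first by rewrite big_ord1.
apply/eqP; rewrite -(eqn_pmul2r (ltn0Sn N.+2)); apply/eqP.
rewrite catS.
have e0 := S1 N.+1. have e1 := S1 N.
set T1 := \sum_(i < N.+2) wc N.+1 i in e0.
set T := \sum_(i < N.+1) wc N i in e1.
have eT1 : \sum_(i < N.+2) catalan i * catalan (N.+1 - i) = T1 by [].
rewrite eT1.
have e2 : \sum_(i < N.+2) i.+1 * wc N.+1 i
          = catalan N.+1 + 4 * \sum_(i < N.+1) i * wc N i + 2 * T.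
  rewrite big_ord_recl /= /wc subn0.
  have c0 : catalan 0 = 1 by [].
  rewrite c0 !mul1n.
  rewrite (eq_bigr (fun i : 'I_N.+1 => 4 * (i * wc N i) + 2 * wc N i)); last first.
    move=> i _; rewrite /wc /bump /= add1n subSS mulnA [_.+2 * _]mulnC catS. nia.
  rewrite big_split /= -!big_distrr /= addnA //.
have e3 : \sum_(i < N.+2) i.+1 * wc N.+1 i = \sum_(i < N.+2) i * wc N.+1 i + T1.
  rewrite /T1 -big_split; apply: eq_bigr => i _; by rewrite mulSn addnC.
have eT : T = catalan N.+1 by rewrite IH.
rewrite e3 in e2.
nia.
Qed.

Section F.
Variable R : comNzRingType.
Local Open Scope ring_scope.
Implicit Types p q r f h : fps R.
Definition fadd p q : fps R := fun n => p n + q n.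
Definition fopp p : fps R := fun n => - p n.
Definition fsub p q : fps R := fadd p (fopp q).
Definition fzero : fps R := fun _ => 0.
Definition fX : fps R := fun n => (n == 1%N)%:R.
Definition fconst (c : R) : fps R := fun n => if n == 0%N then c else 0.
Definition agree n (P : {poly R}) p := forall i, (i <= n)%N -> P`_i = p i.
Definition tr n p : {poly R} := \poly_(i < n.+1) p i.

Lemma agree_tr n p : agree n (tr n p) p.
Proof. by move=> i hi; rewrite coef_poly ltnS hi. Qed.

Lemma agreeM n P Q p q : agree n P p -> agree n Q q -> agree n (P*Q) (fps_mul p q).
Proof.
move=> hP hQ k hk; rewrite coefM /fps_mul; apply: eq_bigr => i _.
have := ltn_ord i => hi.
rewrite hP ?hQ //; lia.
Qed.

Lemma agree_eq n P p q : agree n P p -> agree n P q -> p n = q n.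
Proof. by move=> h1 h2; rewrite -h1 // -h2. Qed.

Lemma agree1 n : agree n 1 (fps1 R).
Proof. by move=> i _; rewrite coef1. Qed.

Lemma fmulA p q r : fps_mul p (fps_mul q r) = fps_mul (fps_mul p q) r.
Proof.
apply: functional_extensionality => n.
apply: (@agree_eq n (tr n p * (tr n q * tr n r))).
  by apply: agreeM; [apply: agree_tr | apply: agreeM; apply: agree_tr].
rewrite mulrA; apply: agreeM; [apply: agreeM|]; apply: agree_tr.
Qed.

Lemma fmulC p q : fps_mul p q = fps_mul q p.
Proof.
apply: functional_extensionality => n.
apply: (@agree_eq n (tr n p * tr n q)); first by apply: agreeM; apply: agree_tr.
rewrite mulrC; apply: agreeM; apply: agree_tr.
Qed.

Lemma fmul1 p : fps_mul (fps1 R) p = p.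
Proof.
apply: functional_extensionality => n.
apply: (@agree_eq n (1 * tr n p)); first by apply: agreeM; [apply: agree1|apply: agree_tr].
rewrite mul1r; apply: agree_tr.
Qed.

Lemma fdistr p q r : fps_mul (fadd p q) r = fadd (fps_mul p r) (fps_mul q r).
Proof.
apply: functional_extensionality => n.
by rewrite /fadd /fps_mul -big_split; apply: eq_bigr => i _; rewrite mulrDl.
Qed.

Lemma fps_ring : ring_theory fzero (fps1 R) fadd (@fps_mul R) fsub fopp (@eq (fps R)).
Proof.
constructor.
- by move=> x; apply: functional_extensionality => n; rewrite /fadd add0r.
- by move=> x y; apply: functional_extensionality => n; rewrite /fadd addrC.
- by move=> x y z; apply: functional_extensionality => n; rewrite /fadd addrA.
- exact: fmul1.
- exact: fmulC.
- exact: fmulA.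
- exact: fdistr.
- by [].
- by move=> x; apply: functional_extensionality => n; rewrite /fadd /fopp addrN.
Qed.

Add Ring fpsRing : fps_ring.


Lemma agreeX n F f k : agree n F f -> agree n (F ^+ k) (fps_exp f k).
Proof.
move=> hF; elim: k => [|k IH]; first by rewrite expr0; apply: agree1.
rewrite exprS; exact: agreeM.
Qed.

Lemma vanish f : f 0%N = 0 -> forall i k, (k < i)%N -> fps_exp f i k = 0.
Proof.
move=> f0; elim=> [//|i IH] k hk.
change (fps_mul f (fps_exp f i) k = 0).
rewrite /fps_mul big1 // => j _.
have [->|jpos] := posnP j; first by rewrite f0 mul0r.
have := ltn_ord j => hj.
rewrite IH ?mulr0 //; lia.
Qed.

Lemma pvanish (F : {poly R}) : F`_0 = 0 -> forall i k, (k < i)%N -> (F ^+ i)`_k = 0.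
Proof.
move=> F0 i k hk.
rewrite (@agreeX k F (fun j => F`_j)) //; first by apply: vanish.
Qed.

Lemma sum_narrow (G : nat -> R) a b : (a <= b)%N -> (forall i, (a <= i < b)%N -> G i = 0) ->
  \sum_(i < b) G i = \sum_(i < a) G i.
Proof.
move=> hab hG; rewrite -!(big_mkord xpredT) (big_cat_nat (leq0n a) hab) /=.
rewrite [X in _ + X]big_nat_cond [X in _ + X]big1 ?addr0 // => i /andP[hi _]; exact: hG.
Qed.

Lemma compB (P F : {poly R}) k : F`_0 = 0 ->
  (P \Po F)`_k = \sum_(i < k.+1) P`_i * (F ^+ i)`_k.
Proof.
move=> F0; rewrite comp_polyE coef_sum.
under eq_bigr do rewrite coefZ.
transitivity (\sum_(i < size P + k.+1) P`_i * (F ^+ i)`_k).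
  symmetry; apply: (@sum_narrow (fun i => P`_i * (F ^+ i)`_k)); first by rewrite leq_addr.
  by move=> i /andP[hi _]; rewrite nth_default ?mul0r.
apply: (@sum_narrow (fun i => P`_i * (F ^+ i)`_k)); first by rewrite leq_addl.
by move=> i /andP[hi _]; rewrite pvanish ?mulr0.
Qed.

Lemma compP n (H F : {poly R}) h f : F`_0 = 0 -> agree n H h -> agree n F f ->
  agree n (H \Po F) (fps_comp h f).
Proof.
move=> F0 hH hF k hk; rewrite compB // /fps_comp; apply: eq_bigr => i _.
have := ltn_ord i => hi.
rewrite hH; last by lia.
by rewrite (@agreeX n F f i hF); last by lia.
Qed.

Lemma comp_mul h1 h2 f : f 0%N = 0 ->
  fps_comp (fps_mul h1 h2) f = fps_mul (fps_comp h1 f) (fps_comp h2 f).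
Proof.
move=> f0; apply: functional_extensionality => n.
have F0 : (tr n f)`_0 = 0 by rewrite coef_poly.
apply: (@agree_eq n ((tr n h1 * tr n h2) \Po tr n f)).
  apply: compP => //; last exact: agree_tr.
  by apply: agreeM; apply: agree_tr.
rewrite comp_polyM; apply: agreeM; apply: compP => //; apply: agree_tr.
Qed.

Lemma comp_add h1 h2 f :
  fps_comp (fadd h1 h2) f = fadd (fps_comp h1 f) (fps_comp h2 f).
Proof.
apply: functional_extensionality => n.
by rewrite /fadd /fps_comp -big_split; apply: eq_bigr => i _; rewrite mulrDl.
Qed.

Lemma comp_1 f : f 0%N = 0 -> fps_comp (fps1 R) f = fps1 R.
Proof.
move=> f0; apply: functional_extensionality => n.
have F0 : (tr n f)`_0 = 0 by rewrite coef_poly.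
apply: (@agree_eq n (1 \Po tr n f)).
  apply: compP => //; [exact: agree1 | exact: agree_tr].
rewrite -polyC1 comp_polyC polyC1; exact: agree1.
Qed.

Lemma agreeX1 n : agree n 'X fX.
Proof. by move=> i _; rewrite coefX. Qed.

Lemma comp_X f : f 0%N = 0 -> fps_comp fX f = f.
Proof.
move=> f0; apply: functional_extensionality => n.
have F0 : (tr n f)`_0 = 0 by rewrite coef_poly.
apply: (@agree_eq n ('X \Po tr n f)).
  apply: compP => //; [exact: agreeX1 | exact: agree_tr].
rewrite comp_polyX; exact: agree_tr.
Qed.

Lemma agreeC n c : agree n c%:P (fconst c).
Proof. by move=> i _; rewrite coefC. Qed.

Lemma coefCM c p n : fps_mul (fconst c) p n = c * p n.
Proof.
apply: esym; apply: (@agree_eq n (c%:P * tr n p) (fun k => c * p k)).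
  by move=> i hi; rewrite coefCM coef_poly ltnS hi.
by apply: agreeM; [apply: agreeC | apply: agree_tr].
Qed.

Lemma coefXM p n : fps_mul fX p n = if n is k.+1 then p k else 0.
Proof.
apply: esym; apply: (@agree_eq n ('X * tr n p) (fun k => if k is j.+1 then p j else 0)).
  move=> i hi; rewrite coefXM coef_poly; case: i hi => [//|i] hi /=.
  by rewrite ltnS (leq_trans (leqnSn i) hi).
by apply: agreeM; [apply: agreeX1 | apply: agree_tr].
Qed.

Lemma scaleE c p : fps_scale c p = fps_mul (fconst c) p.
Proof. by apply: functional_extensionality => n; rewrite coefCM. Qed.

Lemma shiftE p : fps_shift p = fps_mul fX p.
Proof. by apply: functional_extensionality => n; rewrite coefXM. Qed.

Lemma linE c : fps_lin c = fadd (fps1 R) (fps_mul (fconst c) fX).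
Proof.
apply: functional_extensionality => n; rewrite /fadd coefCM /fps_lin /fps1 /fX.
by case: n => [|[|n]] /=; rewrite ?mulr0 ?mulr1 ?addr0 ?add0r.
Qed.

Lemma invE c : fps_mul (fps_lin c) (fps_inv_lin c) = fps1 R.
Proof. apply: functional_extensionality => n; exact: fps_inv_linP. Qed.


Lemma catEq : catalan_fps R = fadd (fps1 R) (fps_mul fX (fps_mul (catalan_fps R) (catalan_fps R))).
Proof.
apply: functional_extensionality => n; rewrite /fadd coefXM.
case: n => [|k]; first by rewrite /catalan_fps /fps1 addr0.
rewrite /fps1 /= add0r /catalan_fps segner natr_sum /fps_mul.
by apply: eq_bigr => i _; rewrite natrM.
Qed.

Variables (a b m : R).
Definition Fr := riordan_act (rg a b) (rf a b m) (catalan_fps R).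

Lemma key : fps_mul (fps_lin b) Fr = fadd (fps_lin a) (fps_mul (fconst m) (fps_mul fX (fps_mul Fr Fr))).
Proof.
have f0 : rf a b m 0%N = 0 by rewrite /rf /fps_scale /fps_shift mulr0.
have HC : fps_comp (catalan_fps R) (rf a b m) =
   fadd (fps1 R) (fps_mul (rf a b m) (fps_mul (fps_comp (catalan_fps R) (rf a b m)) (fps_comp (catalan_fps R) (rf a b m)))).
  by rewrite {1}catEq comp_add comp_1 // comp_mul // comp_X // comp_mul.
rewrite /Fr /riordan_act.
move: HC; set C := fps_comp _ _ => HC.
rewrite /rf scaleE shiftE in HC *.
rewrite /rg.
transitivity (fps_mul (fps_mul (fps_lin a) C) (fps_mul (fps_lin b) (fps_inv_lin b))); first by ring.
rewrite invE.
transitivity (fps_mul (fps_lin a) C); first by ring.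
rewrite {1}HC. ring.
Qed.

Lemma keyn n : Fr n + b * (if n is k.+1 then Fr k else 0)
  = fps_lin a n + m * (if n is k.+1 then fps_mul Fr Fr k else 0).
Proof.
have := f_equal (fun p => p n) key.
rewrite linE.
have -> : fps_mul (fadd (fps1 R) (fps_mul (fconst b) fX)) Fr = fadd Fr (fps_mul (fconst b) (fps_mul fX Fr)) by ring.
by rewrite /fadd !coefCM !coefXM.
Qed.


Lemma mainS (s : nat -> R) :
  s 0%N = 1 ->
  s 1%N = a - b + m ->
  (forall n : nat, (2 <= n)%N ->
     s n = (2%:R * m - b) * s n.-1
           + m * \sum_(0 <= k < n - 2) s k.+1 * s (n - k - 2)%N) ->
  forall n : nat, Fr n = s n.
Proof.
move=> s0 s1 rec.
have F0 : Fr 0%N = 1.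
  by have := keyn 0; rewrite /fps_lin /= !mulr0 !addr0.
suff H : forall n j, (j <= n)%N -> Fr j = s j.
  by move=> n; exact: (H n n (leqnn n)).
elim=> [|n IH] j hj.
  by move: hj; rewrite leqn0 => /eqP ->; rewrite F0 s0.
rewrite leq_eqVlt in hj; case/orP: hj => [/eqP ->|hj]; last by apply: IH.
case: n IH => [|k] IH.
  have := keyn 1; rewrite /fps_lin /= F0 /fps_mul big_ord1 F0 s1 => e.
  have -> : Fr 1%N = Fr 1%N + b * 1 - b by rewrite mulr1 addrK.
  by rewrite e mulr1 ?mul1r ?mulr1 addrAC.
have e := keyn k.+2; rewrite /fps_lin /= in e.
have -> : Fr k.+2 = Fr k.+2 + b * Fr k.+1 - b * Fr k.+1 by rewrite addrK.
rewrite e rec // /fps_mul.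
have IH' : forall i, (i <= k.+1)%N -> Fr i = s i by move=> i hi; apply: IH.
rewrite IH' //.
rewrite (eq_bigr (fun i : 'I_k.+2 => s i * s (k.+1 - i)%N)); last first.
  by move=> i _; rewrite !IH' ?leq_subr // -ltnS.
rewrite big_ord_recl big_ord_recr /= subn0 subnn s0.
rewrite big_mkord.
have -> : (k.+2 - 2 = k)%N by lia.
rewrite (eq_bigr (fun i : 'I_k => s i.+1 * s (k.+2 - i - 2)%N)); last first.
  move=> i _; rewrite /bump /= add1n; congr (_ * s _); lia.
set S := \sum_(i < k) _.
rewrite /bump /= add1n add0r mul1r mulr1 mulrBl !mulrDr mulr_natl mulr2n mulrDl.
by rewrite [m * S + _]addrC addrA [RHS]addrAC.
Qed.
End F.

Local Open Scope ring_scope.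

Theorem mainTheorem4 (R : comNzRingType) (a b m : R) (s : nat -> R) :
  s 0%N = 1 ->
  s 1%N = a - b + m ->
  (forall n : nat, (2 <= n)%N ->
     s n = (2%:R * m - b) * s n.-1
           + m * \sum_(0 <= k < n - 2) s k.+1 * s (n - k - 2)%N) ->
  forall n : nat, riordan_act (rg a b) (rf a b m) (catalan_fps R) n = s n.
Proof.
exact: mainS.
Qed.
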